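(* Let $\mathcal{D}$ be a distribution over pairs $(x,y)$ with $x \in \mathbb{R}^n$ and $y \in [C]$, let $d(\cdot,\cdot)$ be an arbitrary metric on $\mathbb{R}^n$, and let $\epsilon > 0$. Let $f_{\mathrm{det}}: \mathbb{R}^n \to [C] \cup \{\bot\}$ be a detector with risk $R(f_{\mathrm{det}}) = \alpha$ and robust risk with detection $R^{\epsilon}_{\mathrm{adv\text{-}det}}(f_{\mathrm{det}}) = \beta$. Define a classifier $f_{\mathrm{clf}}$ on an input $\hat{x} \in \mathbb{R}^n$ as follows: if $f_{\mathrm{det}}(\hat{x}) \neq \bot$, output $f_{\mathrm{det}}(\hat{x})$; otherwise, if there exists $x'$ with $d(\hat{x}, x') \le \epsilon/2$ and $f_{\mathrm{det}}(x') \neq \bot$, output $f_{\mathrm{det}}(x')$ for such an $x'$; otherwise output a uniformly random label in $[C]$. Then $R(f_{\mathrm{clf}}) \le \alpha$ and $R^{\epsilon/2}_{\mathrm{adv}}(f_{\mathrm{clf}}) \le \beta$.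
   Context: A classifier is a function $f_{\mathrm{clf}}: \mathbb{R}^n \to [C]$; a detector is a function $f_{\mathrm{det}}: \mathbb{R}^n \to [C] \cup \{\bot\}$, where $\bot$ denotes rejection. For $f$ either a classifier or a detector, the risk is $R(f) = \mathbb{E}_{(x,y)\sim\mathcal{D}}[\mathbb{1}\{f(x) \neq y\}]$ (for a detector, outputting $\bot$ on a clean sample counts as an error). The robust risk of a classifier at distance $\epsilon$ is $R^{\epsilon}_{\mathrm{adv}}(f_{\mathrm{clf}}) = \mathbb{E}_{(x,y)\sim\mathcal{D}}[\max_{d(x,\hat{x}) \le \epsilon} \mathbb{1}\{f_{\mathrm{clf}}(\hat{x}) \neq y\}]$. The robust risk with detection of a detector at distance $\epsilon$ is $R^{\epsilon}_{\mathrm{adv\text{-}det}}(f_{\mathrm{det}}) = \mathbb{E}_{(x,y)\sim\mathcal{D}}[\max_{d(x,\hat{x}) \le \epsilon} \mathbb{1}\{f_{\mathrm{det}}(x) \neq y \ \lor\ f_{\mathrm{det}}(\hat{x}) \notin \{y, \bot\}\}]$. Detectors are assumed deterministic. The random label output by $f_{\mathrm{clf}}$ in the last case may be counted as an error in the risk bounds. *)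

(* Defs.v *)
From HB Require Import structures.
From mathcomp Require Import all_boot all_order all_algebra.
From mathcomp Require Import all_classical all_reals all_analysis.
Set Implicit Arguments. Unset Strict Implicit. Unset Printing Implicit Defensive.
Import Order.TTheory GRing.Theory Num.Theory.
Local Open Scope classical_set_scope.
Local Open Scope ring_scope.

Definition is_metric (R : realType) (V : Type) (dist : V -> V -> R) : Prop :=
  (forall x y, 0 <= dist x y) /\
  (forall x y, dist x y = 0 <-> x = y) /\
  (forall x y, dist x y = dist y x) /\
  (forall x y z, dist x z <= dist x y + dist y z).

(* The data distribution D over R^n x [C] is represented as the joint law of a
   pair of random variables (X, Y) : Omega -> 'rV[R]_n * 'I_C on a probability
   space (Omega, P).  For a detector None is the rejection symbol ⊥. *)

(* R(f) = E[ 1{ f(x) <> y } ]  (None never equals a label, so for a detector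
   rejecting a clean sample counts as an error). *)
Definition risk (R : realType) (d : measure_display) (Omega : measurableType d)
    (P : probability Omega R) (n C : nat)
    (X : Omega -> 'rV[R]_n) (Y : Omega -> 'I_C)
    (f : 'rV[R]_n -> option 'I_C) : \bar R :=
  (\int[P]_w (\1_[set w | f (X w) <> Some (Y w)] w)%:E)%E.

Definition adv_risk (R : realType) (d : measure_display) (Omega : measurableType d)
    (P : probability Omega R) (n C : nat)
    (X : Omega -> 'rV[R]_n) (Y : Omega -> 'I_C)
    (dist : 'rV[R]_n -> 'rV[R]_n -> R) (eps : R)
    (f : 'rV[R]_n -> option 'I_C) : \bar R :=
  (\int[P]_w (\1_[set w | exists xh, dist (X w) xh <= eps /\
                                     f xh <> Some (Y w)] w)%:E)%E.

Definition adv_det_risk (R : realType) (d : measure_display) (Omega : measurableType d)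
    (P : probability Omega R) (n C : nat)
    (X : Omega -> 'rV[R]_n) (Y : Omega -> 'I_C)
    (dist : 'rV[R]_n -> 'rV[R]_n -> R) (eps : R)
    (f : 'rV[R]_n -> option 'I_C) : \bar R :=
  (\int[P]_w (\1_[set w | exists xh, dist (X w) xh <= eps /\
        (f (X w) <> Some (Y w) \/
         (f xh <> Some (Y w) /\ f xh <> None))] w)%:E)%E.

(* f_clf is the classifier built from the detector f_det as in the statement:
   - if f_det xh <> ⊥, output f_det xh;
   - else if some x' with dist xh x' <= eps/2 has f_det x' <> ⊥, output f_det x'
     for such an x' (any choice);
   - else output a uniformly random label; following the convention of the
     paper this random label is counted as an error, which we model by the
     output None (never equal to the true label). *)
Definition clf_of_det (R : realType) (n C : nat)
    (dist : 'rV[R]_n -> 'rV[R]_n -> R) (eps : R)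
    (f_det f_clf : 'rV[R]_n -> option 'I_C) : Prop :=
  forall xh : 'rV[R]_n,
    (f_det xh <> None -> f_clf xh = f_det xh) /\
    (f_det xh = None ->
       (exists x', dist xh x' <= eps / 2 /\ f_det x' <> None) ->
       exists x', [/\ dist xh x' <= eps / 2, f_det x' <> None &
                      f_clf xh = f_det x']) /\
    (f_det xh = None ->
       ~ (exists x', dist xh x' <= eps / 2 /\ f_det x' <> None) ->
       f_clf xh = None).

(* Main.v *)
Require Import Defs.
From HB Require Import structures.
From mathcomp Require Import all_boot all_order all_algebra.
From mathcomp Require Import all_classical all_reals all_analysis.
From mathcomp Require Import lra.
Import Order.TTheory GRing.Theory Num.Theory.
Local Open Scope classical_set_scope.
Local Open Scope ring_scope.

Lemma int_indic_le (R : realType) (d : measure_display) (T : measurableType d)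
  (mu : {measure set T -> \bar R}) (A B : set T) :
  A `<=` B ->
  (\int[mu]_w (\1_A w)%:E <= \int[mu]_w (\1_B w)%:E)%E.
Proof.
move=> AB.
rewrite !ge0_integralTE; try by move=> x; rewrite lee_fin indicE.
apply: ereal_sup_le => _ [h /= hA <-]; exists h => //= x.
apply: (le_trans (hA x)); rewrite lee_fin !indicE.
case: (boolP (x \in A)) => xA //=.
by rewrite (_ : x \in B) //; apply/mem_set/AB; move/set_mem: xA.
Qed.

Theorem theorem1 (R : realType) (d : measure_display) (Omega : measurableType d)
    (P : probability Omega R) (n C : nat)
    (X : Omega -> 'rV[R]_n) (Y : Omega -> 'I_C)
    (dist : 'rV[R]_n -> 'rV[R]_n -> R) (eps : R)
    (f_det f_clf : 'rV[R]_n -> option 'I_C) (alpha beta : \bar R) :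
  is_metric dist -> 0 < eps ->
  risk P X Y f_det = alpha ->
  adv_det_risk P X Y dist eps f_det = beta ->
  clf_of_det dist eps f_det f_clf ->
  (risk P X Y f_clf <= alpha)%E /\
  (adv_risk P X Y dist (eps / 2) f_clf <= beta)%E.
Proof.
move=> [d0 [dxx [dsym dtri]]] e0 <- <- H; split.
  apply: int_indic_le => w /= Hc Hd; apply: Hc.
  have [H1 [_ _]] := H (X w).
  by rewrite H1 // Hd.
have he2 : eps / 2 <= eps by lra.
apply: int_indic_le => w /= [xh [dx Hc]].
case: (f_det (X w) =P Some (Y w)) => Hx; last first.
  by exists (X w); split; [rewrite (proj2 (dxx _ _) erefl) ltW | left].
have [H1 [H2 _]] := H xh.
case: (f_det xh =P None) => Hn; last first.
  exists xh; split; first exact: le_trans dx he2.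
  by right; split => //; rewrite -(H1 Hn).
have [x' [dx' Hx' Hc']] : exists x', [/\ dist xh x' <= eps / 2, f_det x' <> None &
                      f_clf xh = f_det x'].
  apply: H2 => //; exists (X w); split; first by rewrite dsym.
  by rewrite Hx.
exists x'; split.
  apply: (le_trans (dtri _ xh _)).
  have := lerD dx dx'; rewrite -splitr; done.
right; split; last exact: Hx'.
by rewrite -Hc'.
Qed.
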